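(* Let $a > 3$ be irrational and let $t$ be a positive integer. Define \[ U = \#\left\{(x,y)\in\mathbb{Z}^2 : x \ge 0,\ x + a y \ge \tfrac{t(a+3)}{12},\ x + 3y \le \tfrac{t}{2}\right\}, \] \[ D = \#\left\{(x,y)\in\mathbb{Z}^2 : y \ge 0,\ x + 3y \ge \tfrac{t}{2},\ x + a y \le \tfrac{t(a+3)}{12}\right\}. \] Then $U \le D$. Moreover, if $t \equiv 4 \pmod{12}$, then $U \le D - 1$.
   Context: Geometrically, $U$ counts lattice points in the region bounded by the $y$-axis, the line $L_1: \frac{12}{a+3}x + \frac{12a}{a+3}y = t$ and the line $L_2: 2x+6y=t$ (lying above $L_1$ and on or below $L_2$), and $D$ counts lattice points in the region bounded by $L_1$, $L_2$ and the $x$-axis (on or above $L_2$ and below $L_1$); the lines $L_1$, $L_2$ meet at $(t/4, t/12)$. *)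

(* Defs.v *)
From HB Require Import structures.
From mathcomp Require Import all_boot all_order all_algebra.
From mathcomp Require Import finmap boolp classical_sets cardinality reals.
Set Implicit Arguments. Unset Strict Implicit. Unset Printing Implicit Defensive.
Import Order.TTheory GRing.Theory Num.Theory.
Local Open Scope ring_scope.
Local Open Scope classical_set_scope.


Definition U_set (R : realType) (a : R) (t : nat) : set (int * int) :=
  [set p | 0 <= p.1 /\
           (t%:R * (a + 3)) / 12 <= p.1%:~R + a * p.2%:~R /\
           p.1%:~R + 3 * p.2%:~R <= (t%:R : R) / 2].

Definition D_set (R : realType) (a : R) (t : nat) : set (int * int) :=
  [set p | 0 <= p.2 /\
           (t%:R : R) / 2 <= p.1%:~R + 3 * p.2%:~R /\
           p.1%:~R + a * p.2%:~R <= (t%:R * (a + 3)) / 12].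

(* Number of elements of a (finite) set of lattice points; both sets above
   are bounded triangles, hence finite, so fset_set is their exact content. *)
Definition lat_count (A : set (int * int)) : nat := (#|` fset_set A|)%fset.

Definition U_count (R : realType) (a : R) (t : nat) : nat := lat_count (U_set a t).
Definition D_count (R : realType) (a : R) (t : nat) : nat := lat_count (D_set a t).

(* Main.v *)
Require Import Defs.
From HB Require Import structures.
From mathcomp Require Import all_boot all_order all_algebra.
From mathcomp Require Import finmap boolp classical_sets cardinality reals.
From mathcomp Require Import zify ring lra.
Import Order.TTheory GRing.Theory Num.Theory.
Local Open Scope ring_scope.
Local Open Scope classical_set_scope.
Set Implicit Arguments.
Lemma fset_set_inf (T : choiceType) (A : set T) : ~ finite_set A -> fset_set A = fset0.
Proof. by move=> nA; rewrite /fset_set; case: pselect. Qed.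

Lemma card_inj_le (T U : choiceType) (A : set T) (B : set U) (f : T -> U) :
  injective f -> (forall p, A p -> B (f p)) -> finite_set B ->
  (#|` fset_set A| <= #|` fset_set B|)%N.
Proof.
move=> inj fAB fB; have [fA|nA] := pselect (finite_set A); last first.
  by rewrite fset_set_inf.
have <- : #|` (f @` fset_set A)%fset| = #|` fset_set A| by rewrite card_imfset.
rewrite -fset_set_image //.
apply: fsubset_leq_card; rewrite -fset_set_sub //; last exact: finite_image.
by move=> _ [p Ap <-]; apply: fAB.
Qed.

Lemma card_inj_lt (T U : choiceType) (A : set T) (B : set U) (f : T -> U) (p0 : U) :
  injective f -> (forall p, A p -> B (f p)) -> finite_set B ->
  B p0 -> (forall p, A p -> f p <> p0) ->
  (#|` fset_set A| + 1 <= #|` fset_set B|)%N.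
Proof.
move=> inj fAB fB Bp0 nim; have [fA|nA] := pselect (finite_set A); last first.
  rewrite fset_set_inf // cardfs0 add0n cardfs_gt0; apply/fset0Pn; exists p0.
  by rewrite in_fset_set // inE.
have <- : #|` (f @` fset_set A)%fset| = #|` fset_set A| by rewrite card_imfset.
have nin : p0 \notin fset_set (f @` A).
  rewrite in_fset_set; last exact: finite_image.
  by apply/negP; rewrite inE => -[p Ap /nim].
rewrite -fset_set_image // addn1 -add1n.
have -> : (1 = nat_of_bool (p0 \notin fset_set (f @` A)))%N by rewrite nin.
rewrite -cardfsU1; apply: fsubset_leq_card.
rewrite -fset_setU1; last exact: finite_image.
rewrite -fset_set_sub //; last by rewrite finite_setU; split; [exact: finite_set1|exact: finite_image].
by move=> q [-> //|[p Ap <-]]; apply: fAB.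
Qed.
Definition cc (R : realType) (a : R) (t : nat) (p : int * int) : int :=
  Num.ceil ((t%:R / 12) + ((t%:R / 2) - (p.1 + 3 * p.2)%:~R) / (a - 3)).
Arguments cc {R}.

Definition ff (R : realType) (a : R) (t : nat) (p : int * int) : int * int :=
  ((t%:Z - (p.1 + 3 * p.2)) - 3 * (p.2 - cc a t p), p.2 - cc a t p).
Arguments ff {R}.

Lemma ff_inj (R : realType) (a : R) (t : nat) : injective (ff a t).
Proof.
move=> [x1 y1] [x2 y2]; rewrite /ff /= => -[e1 e2].
have eu : x1 + 3 * y1 = x2 + 3 * y2 by lia.
have ec : cc a t (x1, y1) = cc a t (x2, y2) by rewrite /cc /= eu.
rewrite ec in e2; have ey : y1 = y2 by lia.
by congr pair; lia.
Qed.

Lemma box_finite (M1 M2 : nat) :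
  finite_set [set p : int * int | (0 <= p.1 <= M1%:Z) /\ (0 <= p.2 <= M2%:Z)].
Proof.
apply: (sub_finite_set _ (finite_image (fun ij : nat * nat => (ij.1%:Z, ij.2%:Z))
  (finite_setX (finite_II M1.+1) (finite_II M2.+1)))).
move=> [x y] /= [/andP[x0 xM] /andP[y0 yM]].
exists (`|x|%N, `|y|%N); last by congr pair; rewrite gez0_abs.
split => /=; lia.
Qed.

Lemma ff_maps (R : realType) (a : R) (t : nat) : 3 < a ->
  forall p, U_set a t p -> D_set a t (ff a t p).
Proof.
move=> a3 [x y] [/= x0 [h1 h2]].
have a30 : 0 < a - 3 by rewrite subr_gt0.
rewrite /D_set /ff /=.
set c := cc a t (x, y).
set tt : R := t%:R in h1 h2 *.
set X : R := x%:~R in h1 h2 *.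
set Y : R := y%:~R in h1 h2 *.
have X0 : 0 <= X by rewrite /X ler0z.
have hQC : tt / 12 + (tt / 2 - (X + 3 * Y)) / (a - 3) <= c%:~R.
  have e3 : (3:int)%:~R = 3 :> R by [].
  rewrite /c /cc /= intrD intrM e3; exact: ceil_ge.
have e3 : (3:int)%:~R = 3 :> R by [].
have hQY : tt / 12 + (tt / 2 - (X + 3 * Y)) / (a - 3) <= Y.
  suff : (tt / 2 - (X + 3 * Y)) / (a - 3) <= Y - tt / 12 by lra.
  rewrite ler_pdivrMr //; lra.
have hcy : c <= y.
  by rewrite /c /cc ceil_le_int intrD intrM e3.
have hQeq : (a - 3) * (tt / 12 + (tt / 2 - (X + 3 * Y)) / (a - 3)) =
   (a - 3) * (tt / 12) + (tt / 2 - (X + 3 * Y)).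
  by field; rewrite lt0r_neq0.
move: hQC hQY hQeq.
set Q := tt / 12 + _ => hQC hQY hQeq; clearbody Q.
set C : R := c%:~R in hQC *.
have H : (a - 3) * (Y - C) <= (a - 3) * (tt / 6 - Q).
  apply: ler_wpM2l; [exact: ltW | lra].
split; first lia.
rewrite !intrD !intrN !intrM -/X -/Y -/C.
have -> : (Posz t)%:~R = tt by [].
split; lra.
Qed.

Lemma D_finite (R : realType) (a : R) (t : nat) : 3 < a -> finite_set (D_set a t).
Proof.
move=> a3.
apply: (sub_finite_set _ (box_finite `|Num.ceil (t%:R * (a + 3) / 12 : R)|
   `|Num.ceil (t%:R / 12 : R)|)).
move=> [x y] [/= y0 [h1 h2]].
have a30 : 0 < a - 3 by rewrite subr_gt0.
set tt : R := t%:R in h1 h2 *.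
set X : R := x%:~R in h1 h2 *.
set Y : R := y%:~R in h1 h2 *.
have tt0 : 0 <= tt by rewrite /tt ler0n.
have Y0 : 0 <= Y by rewrite /Y ler0z.
have hY : Y <= tt / 12.
  rewrite leNgt; apply/negP => hlt.
  have : (a - 3) * (tt / 12) < (a - 3) * Y by rewrite ltr_pM2l.
  lra.
have hX0 : 0 <= X by lra.
have aY : 0 <= a * Y by apply: mulr_ge0 => //; lra.
have hX : X <= tt * (a + 3) / 12 by lra.
have hx0 : 0 <= x by rewrite -(@ler_int R).
have hxc : x <= Num.ceil (tt * (a + 3) / 12).
  by rewrite -(@ler_int R); apply: le_trans hX (ceil_ge _).
have hyc : y <= Num.ceil (tt / 12).
  by rewrite -(@ler_int R); apply: le_trans hY (ceil_ge _).
split; apply/andP; split => //.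
  exact: le_trans hxc (ler_norm _).
exact: le_trans hyc (ler_norm _).
Qed.

Lemma p0_D (R : realType) (a : R) (k : nat) : 3 < a ->
  D_set a (k * 12 + 4)%N (3 * (k:int) + 2, (k:int)).
Proof.
move=> a3; rewrite /D_set /=; split => //.
rewrite !intrD !intrM natrD natrM.
have -> : (Posz k)%:~R = k%:R :> R by [].
have e3 : (3:int)%:~R = 3 :> R by [].
have e2 : (2:int)%:~R = 2 :> R by [].
rewrite ?e3 ?e2.
split; lra.
Qed.

Lemma p0_notim (R : realType) (a : R) (k : nat) : 3 < a ->
  forall p, U_set a (k * 12 + 4)%N p -> ff a (k * 12 + 4)%N p <> (3 * (k:int) + 2, (k:int)).
Proof.
move=> a3 [x y] [/= x0 [h1 h2]]; rewrite /ff /= => -[e1 e2].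
have hu : x + 3 * y = 6 * (k:int) + 2 by lia.
have a30 : 0 < a - 3 by rewrite subr_gt0.
have e3 : (3:int)%:~R = 3 :> R by [].
have e2' : (2:int)%:~R = 2 :> R by [].
have e6 : (6:int)%:~R = 6 :> R by [].
have ek : (Posz k)%:~R = k%:R :> R by [].
have hc : (k:int) < cc a (k * 12 + 4)%N (x, y).
  rewrite -(@ltr_int R); apply: (lt_le_trans _ (ceil_ge _)).
  rewrite /= hu intrD intrM e6 e2' ek natrD natrM.
  have -> : (k%:R * 12%:R + 4%:R) / 2 - (6 * k%:R + 2) = 0 :> R by lra.
  rewrite mul0r addr0; lra.
have hy : y < 2 * (k:int) + 1.
  rewrite -(@ltr_int R).
  have hX : 0 <= (x%:~R : R) by rewrite ler0z.
  have := congr1 (fun z : int => z%:~R : R) hu; rewrite /= !intrD !intrM e3 e6 e2' ek.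
  have f1 : (1:int)%:~R = 1 :> R by []. rewrite ?f1.
  lra.
lia.
Qed.

Theorem lemma2p9 (R : realType) (a : R) (t : nat) :
  3 < a -> @irrational R a -> (0 < t)%N ->
  (U_count a t <= D_count a t)%N /\
  ((t %% 12)%N = 4%N -> (U_count a t + 1 <= D_count a t)%N).
Proof.
move=> a3 _ _; rewrite /U_count /D_count /lat_count; split.
  apply: (@card_inj_le _ _ _ _ (ff a t)); [exact: ff_inj | exact: ff_maps | exact: D_finite].
move=> tm.
have et : t = (t %/ 12 * 12 + 4)%N by rewrite {1}(divn_eq t 12) tm.
rewrite et.
apply: (@card_inj_lt _ _ _ _ (ff a _) (3 * ((t %/ 12)%N : int) + 2, ((t %/ 12)%N : int))).
- exact: ff_inj.
- exact: ff_maps.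
- exact: D_finite.
- exact: p0_D.
- by move=> p /(p0_notim a3).
Qed.
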